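(* Let $X$ be a real Banach space and let $x, y \in X$ be non-zero. Consider the conditions: (i) there exist $\lambda > 0$ and $r>0$ such that the open ball $B(\lambda x, r)$ contains $y$ but does not contain $0$; (ii) there exist $\lambda < 0$ and $r>0$ such that the open ball $B(\lambda x, r)$ contains $y$ but does not contain $0$. Then at most one of (i), (ii) holds. Moreover, neither (i) nor (ii) holds if and only if $x \perp_B y$.
   Context: $B(c, r) = \{ z \in X : \|c - z\| < r\}$. For $x, y \in X$, $x$ is Birkhoff–James orthogonal to $y$, written $x \perp_B y$, if $\|x + \mu y\| \geq \|x\|$ for all $\mu \in \mathbb{R}$. *)

(* Defs.v *)
From HB Require Import structures.
From mathcomp Require Import all_boot all_order all_algebra.
From mathcomp Require Import all_classical all_reals all_analysis.
Set Implicit Arguments. Unset Strict Implicit. Unset Printing Implicit Defensive.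
Import Order.TTheory GRing.Theory Num.Theory.
Local Open Scope ring_scope.

Definition open_ball (R : realType) (X : normedModType R) (c : X) (r : R)
  : X -> Prop := fun z => `|c - z| < r.

Definition bj_orth (R : realType) (X : normedModType R) (x y : X) : Prop :=
  forall mu : R, `|x| <= `|x + mu *: y|.

Definition cond_i (R : realType) (X : normedModType R) (x y : X) : Prop :=
  exists lambda r : R, 0 < lambda /\ 0 < r /\
    open_ball (lambda *: x) r y /\ ~ open_ball (lambda *: x) r 0.

Definition cond_ii (R : realType) (X : normedModType R) (x y : X) : Prop :=
  exists lambda r : R, lambda < 0 /\ 0 < r /\
    open_ball (lambda *: x) r y /\ ~ open_ball (lambda *: x) r 0.

(* Main.v *)
Require Import Defs.
From HB Require Import structures.
From mathcomp Require Import all_boot all_order all_algebra.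
From mathcomp Require Import all_classical all_reals all_analysis.
From mathcomp Require Import lra.
Import Order.TTheory GRing.Theory Num.Theory.
Local Open Scope ring_scope.

Lemma key_eq (R : realType) (X : normedModType R) (x y : X) (l : R) :
  l != 0 -> `|l *: x - y| = `|l| * `|x + (- l^-1) *: y|.
Proof.
move=> l0; rewrite -normrZ scalerDr scalerA mulrN divff // scaleN1r.
by [].
Qed.

Lemma cond_gen (R : realType) (X : normedModType R) (x y : X) (l : R) :
  l != 0 -> x != 0 ->
  (exists r : R, 0 < r /\ open_ball (l *: x) r y /\ ~ open_ball (l *: x) r 0)
  <-> `|x + (- l^-1) *: y| < `|x|.
Proof.
move=> l0 x0; rewrite /open_ball; split.
- move=> [r [r0 [h1 h2]]].
  have h3 : r <= `|l *: x| by rewrite subr0 in h2; rewrite leNgt; apply/negP.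
  rewrite key_eq // in h1; rewrite normrZ in h3.
  have h4 : `|l| * `|x + - l^-1 *: y| < `|l| * `|x| by exact: (lt_le_trans h1).
  by rewrite ltr_pM2l ?normr_gt0 in h4.
- move=> h; exists (`|l| * `|x|); split; first by rewrite mulr_gt0 ?normr_gt0.
  split; first by rewrite key_eq // ltr_pM2l ?normr_gt0.
  by rewrite subr0 normrZ ltxx.
Qed.

Lemma ci_iff (R : realType) (X : normedModType R) (x y : X) : x != 0 ->
  cond_i x y <-> exists mu : R, mu < 0 /\ `|x + mu *: y| < `|x|.
Proof.
move=> x0; split.
- move=> [l [r [l0 [r0 [h1 h2]]]]].
  have ln0 : l != 0 by rewrite gt_eqF.
  exists (- l^-1); split; first by rewrite oppr_lt0 invr_gt0.
  have := proj1 (@cond_gen _ _ x y _ ln0 x0); apply; exists r; by [].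
- move=> [mu [m0 h]].
  have ln0 : (- mu^-1) != 0 by rewrite oppr_eq0 invr_eq0 lt_eqF.
  have [r [r0 hr]] : exists r : R, 0 < r /\ open_ball ((- mu^-1) *: x) r y /\ ~ open_ball ((- mu^-1) *: x) r 0.
    by apply: (proj2 (@cond_gen _ _ x y _ ln0 x0)); rewrite invrN invrK opprK.
  exists (- mu^-1), r; split; first by rewrite oppr_gt0 invr_lt0.
  by split.
Qed.

Lemma cii_iff (R : realType) (X : normedModType R) (x y : X) : x != 0 ->
  cond_ii x y <-> exists mu : R, 0 < mu /\ `|x + mu *: y| < `|x|.
Proof.
move=> x0; split.
- move=> [l [r [l0 [r0 [h1 h2]]]]].
  have ln0 : l != 0 by rewrite lt_eqF.
  exists (- l^-1); split; first by rewrite oppr_gt0 invr_lt0.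
  have := proj1 (@cond_gen _ _ x y _ ln0 x0); apply; exists r; by [].
- move=> [mu [m0 h]].
  have ln0 : (- mu^-1) != 0 by rewrite oppr_eq0 invr_eq0 gt_eqF.
  have [r [r0 hr]] : exists r : R, 0 < r /\ open_ball ((- mu^-1) *: x) r y /\ ~ open_ball ((- mu^-1) *: x) r 0.
    by apply: (proj2 (@cond_gen _ _ x y _ ln0 x0)); rewrite invrN invrK opprK.
  exists (- mu^-1), r; split; first by rewrite oppr_lt0 invr_gt0.
  by split.
Qed.

Theorem mainTheorem3 (R : realType) (X : completeNormedModType R) (x y : X)
  (hx : x != 0) (hy : y != 0) :
  ~ (cond_i x y /\ cond_ii x y) /\
  ((~ cond_i x y /\ ~ cond_ii x y) <-> bj_orth x y).
Proof.
rewrite (@ci_iff _ _ x y hx) (@cii_iff _ _ x y hx); split.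
- move=> [[a [a0 ha]] [b [b0 hb]]].
  have E : (b - a) *: x = b *: (x + a *: y) + (- a) *: (x + b *: y).
    rewrite !scalerDr !scalerA scalerBl !scaleNr mulrC.
    by rewrite mulNr scaleNr addrACA subrr addr0.
  have H := ler_normD (b *: (x + a *: y)) ((- a) *: (x + b *: y)).
  rewrite -E !normrZ (gtr0_norm b0) (gtr0_norm (_ : 0 < - a)) ?oppr_gt0 // in H.
  rewrite (gtr0_norm (_ : 0 < b - a)) in H; last by lra.
  have h1 : b * `|x + a *: y| < b * `|x| by rewrite ltr_pM2l.
  have h2 : - a * `|x + b *: y| < - a * `|x| by rewrite ltr_pM2l ?oppr_gt0.
  by move: (le_lt_trans H (ltrD h1 h2)); rewrite -mulrDl ltxx.
- split.
  + move=> [h1 h2] mu; rewrite leNgt; apply/negP => h.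
    case: (ltgtP mu 0) => hm.
    * by apply: h1; exists mu.
    * by apply: h2; exists mu.
    * by move: h; rewrite hm scale0r addr0 ltxx.
  + move=> hb; split.
    * by move=> [mu [_ h]]; move: (hb mu); rewrite leNgt h.
    * by move=> [mu [_ h]]; move: (hb mu); rewrite leNgt h.
Qed.
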